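(* Let $U$ and $V$ be ultrafilters on a complete Boolean algebra $\mathbb{B}$. If $U\le_\mathrm{M} V$ then $U\le_\mathrm{JPR} V$.
   Context: For a Boolean algebra $\mathbb{B}$, $B\subseteq\mathbb{B}$ and $x\in\mathbb{B}$, write $B\upharpoonright x=\{b\in B: b\le x\}$. If $A,B$ are antichains, $B$ is a refinement of $A$ if every $b\in B$ is below some $a\in A$. $\mathrm{Part}(\mathbb{B})$ denotes the set of all maximal antichains of $\mathbb{B}$ ordered by refinement. M-ordering: for ultrafilters $U,V$ on complete Boolean algebras $\mathbb{B},\mathbb{C}$, $U\le_\mathrm{M}V$ iff there exist $v\in V$ and a complete homomorphism $h\colon\mathbb{B}\to\mathbb{C}\upharpoonright v$ with $U=h^{-1}[V]$. JPR-ordering: $U\le_\mathrm{JPR}V$ iff there exist a function $g\colon\mathrm{Part}(\mathbb{B})\to\mathrm{Part}(\mathbb{C})$ and, for each $A\in\mathrm{Part}(\mathbb{B})$, a function $f_A\colon g(A)\to A$ such that (1) for every $A\in\mathrm{Part}(\mathbb{B})$ and every $X\subseteq A$: $\bigvee X\in U\iff\bigvee f_A^{-1}[X]\in V$; and (2) whenever $A,B\in\mathrm{Part}(\mathbb{B})$ and $B$ refines $A$, $\bigvee\{a\wedge b: a\in g(A),\ b\in g(B),\ f_B(b)\le f_A(a)\}\in V$. *)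

(* Defs.v *)
From HB Require Import structures.
From mathcomp Require Import all_boot all_order.
From Stdlib Require Import ClassicalEpsilon.
Set Implicit Arguments. Unset Strict Implicit. Unset Printing Implicit Defensive.
Import Order.TTheory.
Local Open Scope order_scope.

Section BA.
Context {d : Order.disp_t} {T : ctbDistrLatticeType d}.

Definition is_lub (X : T -> Prop) (s : T) : Prop :=
  (forall x, X x -> x <= s) /\ (forall u, (forall x, X x -> x <= u) -> s <= u).

Definition complete_BA : Prop := forall X : T -> Prop, exists s, is_lub X s.

(* the supremum \/ X (chosen; it is the lub whenever T is complete) *)
Definition sup (X : T -> Prop) : T :=
  epsilon (inhabits (\bot : T)) (is_lub X).

Definition ultrafilter (U : T -> Prop) : Prop :=
  [/\ U \top, ~ U \bot,
      (forall x y, U x -> x <= y -> U y),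
      (forall x y, U x -> U y -> U (x `&` y)) &
      (forall x, U x \/ U (~` x))].

Definition antichain (A : T -> Prop) : Prop :=
  (forall a, A a -> a != \bot) /\
  (forall a b, A a -> A b -> a <> b -> a `&` b = \bot).

Definition maximal_antichain (A : T -> Prop) : Prop :=
  antichain A /\
  (forall A' : T -> Prop, antichain A' -> (forall a, A a -> A' a) ->
     forall a, A' a -> A a).

Definition refines (B A : T -> Prop) : Prop :=
  forall b, B b -> exists2 a, A a & b <= a.

(* h : T -> T|v is a complete homomorphism (T|v has top v, bottom \bot,
   complement x |-> v `&` ~` x, and the same joins as T) *)
Definition complete_hom_into_restr (v : T) (h : T -> T) : Prop :=
  [/\ (forall x, h x <= v),
      h \top = v,
      (forall x, h (~` x) = v `&` ~` (h x)) &
      (forall X : T -> Prop, h (sup X) = sup (fun y => exists2 x, X x & h x = y))].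

Definition leM (U V : T -> Prop) : Prop :=
  exists v h, [/\ V v, complete_hom_into_restr v h &
                  forall x, U x <-> V (h x)].

(* JPR-ordering (both ultrafilters on the same algebra T);
   g : Part(T) -> Part(T) and f A : g(A) -> A are represented by total
   functions with the corresponding range conditions. *)
Definition leJPR (U V : T -> Prop) : Prop :=
  exists (g : (T -> Prop) -> (T -> Prop)) (f : (T -> Prop) -> T -> T),
    [/\ (forall A, maximal_antichain A -> maximal_antichain (g A)),
        (forall A, maximal_antichain A -> forall b, g A b -> A (f A b)),
        (forall A, maximal_antichain A -> forall X : T -> Prop,
           (forall x, X x -> A x) ->
           (U (sup X) <-> V (sup (fun b => g A b /\ X (f A b))))) &
        (forall A B, maximal_antichain A -> maximal_antichain B -> refines B A ->
           V (sup (fun c => exists a b, [/\ g A a, g B b, f B b <= f A a &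
                                            c = a `&` b])))].
End BA.

(* Main.v *)
Require Import Defs.
From mathcomp Require Import all_boot all_order.
From Stdlib Require Import ClassicalEpsilon Classical.
Set Implicit Arguments. Unset Strict Implicit.
Import Order.Theory.
Local Open Scope order_scope.

Lemma sup_lub (d : Order.disp_t) (T : ctbDistrLatticeType d) (X : T -> Prop) :
  complete_BA (T := T) -> is_lub X (sup X).
Proof. move=> C; rewrite /sup; apply: epsilon_spec; exact: C. Qed.

Lemma sup_ub (d : Order.disp_t) (T : ctbDistrLatticeType d) (X : T -> Prop) x :
  complete_BA (T := T) -> X x -> x <= sup X.
Proof. by move=> C Xx; case: (sup_lub X C) => H _; apply: H. Qed.

Lemma sup_least (d : Order.disp_t) (T : ctbDistrLatticeType d) (X : T -> Prop) u :
  complete_BA (T := T) -> (forall x, X x -> x <= u) -> sup X <= u.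
Proof. by move=> C H; case: (sup_lub X C) => _ H'; apply: H'. Qed.

Lemma sup_eq (d : Order.disp_t) (T : ctbDistrLatticeType d) (X : T -> Prop) s :
  complete_BA (T := T) -> is_lub X s -> sup X = s.
Proof.
move=> C [H1 H2]; apply/eqP; rewrite eq_le; apply/andP; split.
  exact: sup_least.
by apply: H2 => x Xx; apply: sup_ub.
Qed.

Lemma sup_pair (d : Order.disp_t) (T : ctbDistrLatticeType d) (a b : T) :
  complete_BA (T := T) -> sup (fun z => z = a \/ z = b) = a `|` b.
Proof.
move=> C; apply: sup_eq => //; split.
  by move=> x [->|->]; rewrite ?leUl ?leUr.
by move=> u H; rewrite leUx H ?H //; [right|left].
Qed.

Lemma maxac_top (d : Order.disp_t) (T : ctbDistrLatticeType d) (A : T -> Prop) :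
  complete_BA (T := T) -> maximal_antichain A -> sup A = \top.
Proof.
move=> C [[nz dis] mx].
set s := sup A.
have Hc : ~` s = \bot.
  apply: NNPP => Hne.
  have AC : A (~` s).
    apply: (mx (fun x => A x \/ x = ~` s)); last by right.
    - split.
      + by move=> a [/nz //|->]; apply/eqP.
      + have dd : forall a, A a -> a `&` ~` s = \bot.
          by move=> a Aa; apply/eqP; rewrite disj_leC complK; apply: sup_ub.
        move=> a b [Aa|->] [Ab|->] ab //; [exact: dis| exact: dd|].
        by rewrite meetC dd.
    - by move=> a Aa; left.
  apply: Hne; have : ~` s <= s by apply: sup_ub.
  by move/meet_idPl; rewrite meetCx => <-.
by rewrite -(complK s) Hc compl0.
Qed.

Lemma aux (d : Order.disp_t) (T : ctbDistrLatticeType d) (a b w x y : T) :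
  a <= ~` w -> b <= ~` w -> (a `|` (w `&` x)) `&` (b `|` (w `&` y)) = (a `&` b) `|` (w `&` (x `&` y)).
Proof.
move=> ha hb.
have A1 : a `&` w = \bot by apply/eqP; rewrite disj_leC.
have B1 : w `&` b = \bot by apply/eqP; rewrite meetC disj_leC.
rewrite meetUl !meetUr [a `&` (w `&` y)]meetA A1 meet0x joinx0 -[w `&` x `&` b]meetA [x `&` b]meetC meetA B1 meet0x join0x.
suff -> : w `&` x `&` (w `&` y) = w `&` (x `&` y) by []. by rewrite -meetA (meetCA x w y) meetA meetxx.
Qed.

Section Hom.
Variables (d : Order.disp_t) (T : ctbDistrLatticeType d).
Implicit Types (x y v : T).

Lemma hom_bot v (h : T -> T) : complete_hom_into_restr v h -> h \bot = \bot.
Proof. by rewrite /complete_hom_into_restr; case=> _ h1 hc _; rewrite -{1}compl1 hc h1 meetxC. Qed.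

Lemma hom_join v (h : T -> T) x y : complete_BA (T := T) ->
  complete_hom_into_restr v h -> h (x `|` y) = h x `|` h y.
Proof.
rewrite /complete_hom_into_restr; move=> C [_ _ _ hs]; rewrite -sup_pair // hs; apply: sup_eq => //; split.
  by move=> z [w [->|->] <-]; rewrite ?leUl ?leUr.
move=> u H; rewrite leUx; apply/andP; split; apply: H; [exists x; first left|exists y; first right]; done.
Qed.

Lemma hom_le v (h : T -> T) x : complete_hom_into_restr v h -> h x <= v.
Proof. by rewrite /complete_hom_into_restr; case. Qed.

Lemma hom_meet v (h : T -> T) x y : complete_BA (T := T) ->
  complete_hom_into_restr v h -> h (x `&` y) = h x `&` h y.
Proof.
move=> C hh; have hh2 := hh; move: hh2; rewrite /complete_hom_into_restr; case=> hv h1 hc _.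
rewrite -[x `&` y]complK complI hc (hom_join _ _ C hh) !hc complU !complI !complK.
rewrite meetA [v `&` (_ `|` _)]meetUr meetxC join0x.
have -> : v `&` h x = h x by apply/meet_idPr.
rewrite meetUr.
have -> : h x `&` ~` v = \bot by apply/eqP; rewrite disj_leC complK.
by rewrite join0x.
Qed.

Lemma hom_mono v (h : T -> T) x y : complete_BA (T := T) ->
  complete_hom_into_restr v h -> x <= y -> h x <= h y.
Proof.
by move=> C hh /meet_idPl E; rewrite -E (hom_meet _ _ C hh) leIr.
Qed.
End Hom.

Theorem mainTheorem1 (d : Order.disp_t) (T : ctbDistrLatticeType d)
  (U V : T -> Prop) :
  complete_BA (T := T) -> ultrafilter U -> ultrafilter V ->
  leM U V -> leJPR U V.
Proof.
move=> C uU uV [v [h [Vv hh eqUV]]].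
case: uV => VT Vbot Vup Vmeet _.
have hh2 := hh; move: hh2; rewrite /complete_hom_into_restr; case=> hv h1 hc hs.
pose hp x := h x `|` (~` v `&` x).
have hle x : h x <= ~` ~` v by rewrite complK.
have hp_meet x y : hp (x `&` y) = hp x `&` hp y.
  by rewrite /hp aux ?hle // (hom_meet _ _ C hh).
have hp_bot : hp \bot = \bot by rewrite /hp (hom_bot hh) meetx0 joinx0.
have hp_mono x y : x <= y -> hp x <= hp y.
  by move/meet_idPl => E; rewrite -E hp_meet leIr.
have h_hp x : h x <= hp x by apply: leUl.
have h_bot x : hp x = \bot -> h x = \bot.
  by move=> E; apply/eqP; rewrite -lex0 -E h_hp.
pose g (A : T -> Prop) := fun b => exists2 a, A a & hp a = b /\ b != \bot.
pose f (A : T -> Prop) (b : T) := epsilon (inhabits \bot) (fun a => A a /\ hp a = b).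
have fP A b : g A b -> A (f A b) /\ hp (f A b) = b.
  case=> a Aa [E _].
  by apply: (epsilon_spec (inhabits \bot) (fun a => A a /\ hp a = b)); exists a.
have inj A a a' : antichain A -> A a -> A a' -> hp a = hp a' -> hp a != \bot -> a = a'.
  move=> [_ dis] Aa Aa' E nz; apply: NNPP => ne.
  by move/eqP: nz; apply; rewrite -[hp a]meetxx {2}E -hp_meet dis.
have fg A a : maximal_antichain A -> A a -> hp a != \bot -> g A (hp a) /\ f A (hp a) = a.
  move=> mA Aa nz; have ga : g A (hp a) by exists a.
  split => //; have [Af Ef] := fP A _ ga.
  by apply: (inj A) => //; [exact: mA.1 | rewrite Ef].
exists g, f; split.
- move=> A mA; have [[nzA disA] _] := mA; split.
  + split; first by move=> b [a _ [_ nz]].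
    move=> b1 b2 [a1 A1 [<- _]] [a2 A2 [<- _]] ne.
    by rewrite -hp_meet disA //; move=> E; apply: ne; rewrite E.
  + move=> A' [nz' dis'] sub c A'c; apply: NNPP => ngc.
    have cm a : A a -> c `&` hp a = \bot.
      move=> Aa; case: (eqVneq (hp a) \bot) => [->|nz]; first exact: meetx0.
      apply: dis' => //; first by apply: sub; exists a.
      by move=> E; apply: ngc; exists a => //; split => //; rewrite E.
    have c1 : c `&` v = \bot.
      apply/eqP; rewrite disj_leC lexC -h1 -(maxac_top C mA) hs.
      apply: sup_least => // y [a Aa <-].
      rewrite -disj_leC meetC -lex0 -(cm a Aa); apply: leI2 => //.
    have c2 : c `&` ~` v = \bot.
      have : \top <= ~` (c `&` ~` v).
        rewrite -(maxac_top C mA); apply: sup_least => // a Aa.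
        rewrite lexC -disj_leC -lex0 -(cm a Aa) -meetA; apply: leI2 => //.
        exact: leUr.
      by rewrite lexC compl1 lex0 => /eqP.
    have : c = \bot by rewrite -[c]meetx1 -(joinxC v) meetUr c1 c2 joinx0.
    by move=> E; move: (nz' c A'c); rewrite E eqxx.
- by move=> A _ b gb; exact: (fP A b gb).1.
- move=> A mA X XA.
  set Y := fun b => g A b /\ X (f A b).
  have le1 : h (sup X) <= sup Y.
    rewrite hs; apply: sup_least => // y [a Xa <-].
    case: (eqVneq (hp a) \bot) => [E|nz]; first by rewrite h_bot // le0x.
    apply: le_trans (h_hp a) _; apply: sup_ub => //.
    have [ga fa] := fg A a mA (XA a Xa) nz.
    by split => //; rewrite fa.
  have le2 : sup Y <= h (sup X) `|` ~` v.
    apply: sup_least => // b [gb Xf]; have [Af <-] := fP A b gb.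
    rewrite /hp; apply: leU2; last exact: leIl.
    by apply: (hom_mono C hh); apply: sup_ub.
  rewrite eqUV; split => H; first exact: Vup H le1.
  have := Vmeet _ _ (Vup _ _ H le2) Vv.
  rewrite meetUl meetCx joinx0 => H2; apply: Vup H2 _; exact: leIl.
- move=> A B mA mB ref; apply: Vup Vv _.
  rewrite -h1 -(maxac_top C mB) hs; apply: sup_least => // y [b' Bb' <-].
  case: (eqVneq (hp b') \bot) => [E|nz]; first by rewrite h_bot // le0x.
  have [a' Aa' le] := ref b' Bb'.
  have nza : hp a' != \bot.
    apply/negP => /eqP E; move/eqP: nz; apply; apply/eqP.
    by rewrite -lex0 -E; apply: hp_mono.
  have [ga fa] := fg A a' mA Aa' nza.
  have [gb fb] := fg B b' mB Bb' nz.
  apply: le_trans (h_hp b') _; apply: sup_ub => //.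
  exists (hp a'), (hp b'); split => //; first by rewrite fa fb.
  by rewrite meetC; apply/esym/meet_idPl/hp_mono.
Qed.
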